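(* Let $t$ be the Thue–Morse word. For every $n\geq 2$, one has $f_{aa}(n)\geq n-1$ and $f_{ab}(n)\geq n-1$.
   Context: The Thue–Morse word $t=0110100110010110\cdots$ is the fixed point starting with $0$ of the substitution $\mu:0\mapsto 01,\ 1\mapsto 10$. $f_{aa}(n)$ (resp. $f_{ab}(n)$) denotes the number of distinct factors of $t$ of length $n$ that begin and end with the same letter (resp. with different letters). *)

(* Defs.v *)
From mathcomp Require Import all_boot.
Set Implicit Arguments. Unset Strict Implicit. Unset Printing Implicit Defensive.

(* Letters: false = 0, true = 1. *)
Definition mu (w : seq bool) : seq bool := flatten [seq [:: a; ~~ a] | a <- w].

Definition mu_iter (k : nat) : seq bool := iter k mu [:: false].

(* The Thue-Morse word t = lim mu^k(0), as a function nat -> letter: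
   t i is the i-th letter of mu^(i+1)(0), which has length 2^(i+1) > i. *)
Definition thue_morse (i : nat) : bool := nth false (mu_iter i.+1) i.

Definition tm_factor (i n : nat) : seq bool := mkseq (fun j => thue_morse (i + j)) n.

Definition is_tm_factor (w : seq bool) : Prop := exists i, w = tm_factor i (size w).

(* f_aa(n) >= m : there are at least m distinct factors of length n
   beginning and ending with the same letter. *)
Definition faa_ge (n m : nat) : Prop :=
  exists s : seq (seq bool), [/\ uniq s, m <= size s &
    forall w, w \in s -> [/\ is_tm_factor w, size w = n &
                          head false w = last false w]].

Definition fab_ge (n m : nat) : Prop :=
  exists s : seq (seq bool), [/\ uniq s, m <= size s &
    forall w, w \in s -> [/\ is_tm_factor w, size w = n &
                          head false w != last false w]].

(* Main.v *)
Require Import Defs.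
From mathcomp Require Import all_boot zify.
Notation t := thue_morse.
Lemma size_mu w : size (mu w) = (size w).*2.
Proof. by elim: w => //= a w IH; rewrite /mu /= -/(mu w) IH doubleS. Qed.
Lemma size_mu_iter k : size (mu_iter k) = 2 ^ k.
Proof. elim: k => //= k IH. rewrite /mu_iter /= -/(mu_iter k) size_mu IH expnS mul2n //. Qed.
Lemma nth_mu0 w i : i < size w -> nth false (mu w) i.*2 = nth false w i.
Proof. by elim: w i => [|a w IH] [|i] //= Hi; rewrite /mu /= -/(mu w) ?doubleS /= ?IH. Qed.
Lemma nth_mu1 w i : i < size w -> nth false (mu w) i.*2.+1 = ~~ nth false w i.
Proof. by elim: w i => [|a w IH] [|i] //= Hi; rewrite /mu /= -/(mu w) ?doubleS /= ?IH. Qed.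
Lemma mu_iterS k : mu_iter k.+1 = mu (mu_iter k).
Proof. by []. Qed.
Lemma head0 k : nth false (mu_iter k) 0 = false.
Proof. elim: k => // k IH; rewrite mu_iterS -[0]/(0.*2) nth_mu0 ?size_mu_iter ?expn_gt0 //. Qed.
Lemma stab k : forall i k', i < 2 ^ k -> k <= k' -> nth false (mu_iter k') i = nth false (mu_iter k) i.
Proof.
elim: k => [|k IH] i k'.
  by rewrite expn0 ltnS leqn0 => /eqP -> _; rewrite !head0.
case: k' => [//|k'] Hi Hk.
have Hh : i./2 < 2 ^ k by rewrite ltn_half_double -mul2n -expnS.
rewrite !mu_iterS -(odd_double_half i).
have Hs : forall j, k <= j -> i./2 < size (mu_iter j).
  move=> j Hj; rewrite size_mu_iter; apply: leq_trans Hh _; exact: leq_pexp2l.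
case: (odd i) => /=.
  by rewrite !nth_mu1 ?Hs // IH.
by rewrite add0n !nth_mu0 ?Hs // IH.
Qed.
Lemma tm_eq k i : i < 2 ^ k -> t i = nth false (mu_iter k) i.
Proof.
move=> Hi; rewrite /thue_morse.
have Hi1 : i < 2 ^ i.+1 by apply: ltnW; apply: ltn_expl.
rewrite -(@stab i.+1 i (k + i.+1)) // ?leq_addl // -(@stab k i (k + i.+1)) // leq_addr //.
Qed.
Lemma tmE0 i : t (2 * i) = t i.
Proof.
have Hi : i < 2 ^ i.+1 by apply: ltnW; apply: ltn_expl.
rewrite (@tm_eq i.+2); last by rewrite mul2n expnS mul2n ltn_double.
by rewrite mu_iterS mul2n nth_mu0 ?size_mu_iter.
Qed.
Lemma tmE1 i : t (2 * i + 1) = ~~ t i.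
Proof.
have Hi : i < 2 ^ i.+1 by apply: ltnW; apply: ltn_expl.
rewrite addn1 (@tm_eq i.+2); last by rewrite mul2n expnS mul2n ltn_Sdouble.
by rewrite mu_iterS mul2n nth_mu1 ?size_mu_iter.
Qed.
Lemma no_aaa j : ~~ ((t j == t (j + 1)) && (t (j + 1) == t (j + 2))).
Proof.
have [l [->|->]] : exists l, j = 2 * l \/ j = 2 * l + 1.
  exists j./2; rewrite -{1 3}(odd_double_half j) -mul2n; case: (odd j); [right|left]; lia.
  rewrite tmE1 tmE0; case: (t l); by [].
rewrite (_ : 2 * l + 1 + 1 = 2 * (l + 1)); last lia.
rewrite (_ : 2 * l + 1 + 2 = 2 * (l + 1) + 1); last lia.
rewrite !tmE1 tmE0; by case: (t (l+1)); case: (t l).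
Qed.

Lemma fac_nth i j n k : tm_factor i n = tm_factor j n -> k < n -> t (i + k) = t (j + k).
Proof. by move=> E Hk; have := congr1 (fun s => nth false s k) E; rewrite !nth_mkseq. Qed.

Lemma fac_ext i j n : (forall k, k < n -> t (i + k) = t (j + k)) -> tm_factor i n = tm_factor j n.
Proof.
move=> H; apply: (@eq_from_nth _ false); rewrite ?size_mkseq // => k Hk.
by rewrite !nth_mkseq // H.
Qed.

Lemma uniq_map_weak (a f : nat -> seq bool) s :
  uniq (map a s) -> (forall x y, f x = f y -> a x = a y) -> uniq (map f s).
Proof.
move=> U H; elim: s U => //= x s IH /andP[nx u]; rewrite IH // andbT.
apply: contra nx => /mapP[y ys e]; apply/mapP; exists y => //; exact: H e.
Qed.

Lemma uniq_build (h a b : nat -> seq bool) (g1 g2 : nat -> nat) s1 s2 :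
 uniq (map a s1) -> uniq (map b s2) ->
 (forall x y, h (g1 x) = h (g1 y) -> a x = a y) ->
 (forall x y, h (g2 x) = h (g2 y) -> b x = b y) ->
 (forall x y, h (g1 x) <> h (g2 y)) ->
 uniq (map h (map g1 s1 ++ map g2 s2)).
Proof.
move=> U1 U2 H1 H2 D; rewrite map_cat cat_uniq -!map_comp.
rewrite (@uniq_map_weak a (h \o g1) s1 U1 H1) (@uniq_map_weak b (h \o g2) s2 U2 H2) /= andbT.
apply/hasPn => w /mapP[y _ ->]; apply/mapP => -[x _ e]; exact: (D x y (esym e)).
Qed.

Lemma disj i j N : 5 <= N -> tm_factor (2 * i) N <> tm_factor (2 * j + 1) N.
Proof.
move=> HN E.
have H0 := @fac_nth _ _ _ 0 E ltac:(lia).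
have H1 := @fac_nth _ _ _ 1 E ltac:(lia).
have H2 := @fac_nth _ _ _ 2 E ltac:(lia).
have H3 := @fac_nth _ _ _ 3 E ltac:(lia).
move: H0 H1 H2 H3.
rewrite (_ : 2 * i + 0 = 2 * i); last lia.
rewrite (_ : 2 * j + 1 + 0 = 2 * j + 1); last lia.
rewrite (_ : 2 * j + 1 + 1 = 2 * (j + 1)); last lia.
rewrite (_ : 2 * i + 2 = 2 * (i + 1)); last lia.
rewrite (_ : 2 * j + 1 + 2 = 2 * (j + 1) + 1); last lia.
rewrite (_ : 2 * i + 3 = 2 * (i + 1) + 1); last lia.
rewrite (_ : 2 * j + 1 + 3 = 2 * (j + 2)); last lia.
rewrite !tmE0 !tmE1.
have := no_aaa j.
case: (t i); case: (t (i+1)); case: (t j); case: (t (j+1)); case: (t (j+2)) => //= *; by congruence.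
Qed.

Definition P n := forall c : bool, exists s : seq nat,
  [/\ n.-1 <= size s, uniq (map (fun i => tm_factor i n) s) &
      all (fun i => (t i == t (i + n.-1)) == c) s].

Lemma inj0 i j N m : 2 * m.-1 < N -> tm_factor (2 * i) N = tm_factor (2 * j) N ->
  tm_factor i m = tm_factor j m.
Proof.
move=> HN E; apply: fac_ext => k Hk.
have := @fac_nth _ _ _ (2 * k) E ltac:(lia).
by rewrite -!mulnDr !tmE0.
Qed.

Lemma inj1 i j N m : 2 * m.-1 < N -> tm_factor (2 * i + 1) N = tm_factor (2 * j + 1) N ->
  tm_factor i m = tm_factor j m.
Proof.
move=> HN E; apply: fac_ext => k Hk.
have := @fac_nth _ _ _ (2 * k) E ltac:(lia).
rewrite (_ : 2 * i + 1 + 2 * k = 2 * (i + k) + 1); last lia.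
rewrite (_ : 2 * j + 1 + 2 * k = 2 * (j + k) + 1); last lia.
by rewrite !tmE1 => /negb_inj.
Qed.

Lemma inj1' i j m : 0 < m -> tm_factor (2 * i + 1) (2 * m) = tm_factor (2 * j + 1) (2 * m) ->
  tm_factor i m.+1 = tm_factor j m.+1.
Proof.
move=> Hm E; apply: fac_ext => k Hk.
case: (ltnP k m) => Hkm.
  have E' := @inj1 i j (2 * m) m ltac:(lia) E.
  exact: fac_nth E' Hkm.
have -> : k = m by lia.
have := @fac_nth _ _ _ (2 * m - 1) E ltac:(lia).
rewrite (_ : 2 * i + 1 + (2 * m - 1) = 2 * (i + m)); last lia.
rewrite (_ : 2 * j + 1 + (2 * m - 1) = 2 * (j + m)); last lia.
by rewrite !tmE0.
Qed.

Lemma auxb (a b c : bool) : (a == b) == ~~ c -> (a == ~~ b) == c.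
Proof. by case: a; case: b; case: c. Qed.
Lemma auxb' (a b c : bool) : (a == b) == ~~ c -> (~~ a == b) == c.
Proof. by case: a; case: b; case: c. Qed.

Lemma mainP n : 2 <= n -> P n.
Proof.
elim/ltn_ind: n => n IH Hn.
have [->|[->|[->|H5]]] : n = 2 \/ n = 3 \/ n = 4 \/ 5 <= n by lia.
- move=> [|]; [exists [:: 1] | exists [:: 0]]; split; vm_compute; reflexivity.
- move=> [|]; [exists [:: 2; 3] | exists [:: 0; 1]]; split; vm_compute; reflexivity.
- move=> [|]; [exists [:: 0; 1; 4] | exists [:: 2; 5; 7]]; split; vm_compute; reflexivity.
have [m [Hm [En|En]]] : exists m, 3 <= m /\ (n = 2 * m - 1 \/ n = 2 * m).
  have := odd_double_half n; rewrite -mul2n; case: (odd n) => /= e.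
    by exists (n./2 + 1); lia.
  by exists (n./2); lia.
- subst n => c.
  have [s [Hs Us As]] := IH m ltac:(lia) ltac:(lia) c.
  exists (map (fun i => 2 * i) s ++ map (fun i => 2 * i + 1) s); split.
  + rewrite size_cat !size_map; lia.
  + apply: (@uniq_build _ (fun i => tm_factor i m) (fun i => tm_factor i m)
             (fun i => 2 * i) (fun i => 2 * i + 1) s s Us Us).
    * by move=> x y; apply: inj0; lia.
    * by move=> x y; apply: inj1; lia.
    * by move=> x y; apply: disj; lia.
  + rewrite all_cat !all_map; apply/andP; split; apply/allP => i /(allP As) /=.
    * rewrite (_ : 2 * i + (2 * m - 1).-1 = 2 * (i + m.-1)); last lia.
      by rewrite !tmE0.
    * rewrite (_ : 2 * i + 1 + (2 * m - 1).-1 = 2 * (i + m.-1) + 1); last lia.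
      by rewrite !tmE1; case: (t i); case: (t (i + m.-1)).
- subst n => c.
  have [s1 [Hs1 Us1 As1]] := IH m ltac:(lia) ltac:(lia) (~~ c).
  have [s2 [Hs2 Us2 As2]] := IH (m + 1) ltac:(lia) ltac:(lia) (~~ c).
  exists (map (fun i => 2 * i) s1 ++ map (fun i => 2 * i + 1) s2); split.
  + rewrite size_cat !size_map; lia.
  + apply: (@uniq_build _ (fun i => tm_factor i m) (fun i => tm_factor i (m + 1))
             (fun i => 2 * i) (fun i => 2 * i + 1) s1 s2 Us1 Us2).
    * by move=> x y; apply: inj0; lia.
    * by move=> x y E; rewrite addn1; apply: inj1' E; lia.
    * by move=> x y; apply: disj; lia.
  + rewrite all_cat !all_map; apply/andP; split.
    * apply/allP => i /(allP As1) /=.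
      rewrite (_ : 2 * i + (2 * m).-1 = 2 * (i + m.-1) + 1); last lia.
      rewrite tmE0 tmE1; exact: auxb.
    * apply/allP => i /(allP As2) /=.
      rewrite (_ : 2 * i + 1 + (2 * m).-1 = 2 * (i + (m + 1).-1)); last lia.
      rewrite tmE0 tmE1; exact: auxb'.
Qed.

Lemma hdmk (f : nat -> bool) n : 0 < n -> head false (mkseq f n) = f 0.
Proof. by case: n. Qed.
Lemma lastmk (f : nat -> bool) n : 0 < n -> last false (mkseq f n) = f n.-1.
Proof. by case: n => // n _; rewrite -nth_last size_mkseq /= nth_mkseq. Qed.

Theorem corollary1 : forall n : nat, 2 <= n -> faa_ge n (n - 1) /\ fab_ge n (n - 1).
Proof.
move=> n Hn.
have gen : forall c : bool, exists s : seq (seq bool), [/\ uniq s, n - 1 <= size s &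
    forall w, w \in s -> [/\ is_tm_factor w, size w = n & (head false w == last false w) = c]].
  move=> c; have [s [Hs Us As]] := @mainP n Hn c.
  exists (map (fun i => tm_factor i n) s); split => //.
    by rewrite size_map; lia.
  move=> w /mapP[i /(allP As) Hi ->]; split.
  - by exists i; rewrite size_mkseq.
  - by rewrite size_mkseq.
  - rewrite /tm_factor (@hdmk _ n (ltnW Hn)) (@lastmk _ n (ltnW Hn)) addn0; exact: (eqP Hi).
split.
- have [s [U S H]] := gen true; exists s; split => // w /H [? ? e]; split => //; exact/eqP.
- have [s [U S H]] := gen false; exists s; split => // w /H [? ? e]; split => //; by rewrite e.
Qed.
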